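(* Let $n\ge3$. An oriented cycle $\overrightarrow{C_n}$ is $\{1\}$-antimagic if and only if it is unidirectional or $\Theta$-oriented.
   Context: An oriented graph is a simple graph each of whose edges is given one direction (an arc $(u,v)$ goes from $u$ to $v$). For vertices $u,v$, $d(u,v)$ is the length of a shortest directed path from $u$ to $v$ ($d(u,u)=0$, $\infty$ if no path). For a set $D$ of nonnegative integers, $N_D(v)=\{y : d(v,y)\in D\}$; for a bijection $f:V\to\{1,\dots,|V|\}$, $\omega_D(v)=\sum_{x\in N_D(v)}f(x)$ (empty sum $0$); $f$ is $D$-antimagic if distinct vertices have distinct $D$-weights, and the graph is $D$-antimagic if such an $f$ exists. A source is a vertex of in-degree $0$, a sink a vertex of out-degree $0$. An oriented cycle $\overrightarrow{C_n}$ is an orientation of the cycle on $v_1,\dots,v_n$. It is unidirectional if (up to relabeling) its arcs are $(v_i,v_{i+1})$, $1\le i\le n-1$, and $(v_n,v_1)$. It is $\Theta$-oriented if it has exactly one source and exactly one sink and these two vertices are adjacent; up to relabeling its arcs are $(v_i,v_{i+1})$, $1\le i\le n-1$, and $(v_1,v_n)$. *)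

(* Defs.v *)
From mathcomp Require Import all_boot all_fingroup.
Set Implicit Arguments. Unset Strict Implicit. Unset Printing Implicit Defensive.

Section Digraph.
Variables (T : finType) (e : rel T).

Definition walk_len (u v : T) (k : nat) : bool :=
  [exists p : k.-tuple T, path e u p && (last u p == v)].

Definition dist_eq (u v : T) (k : nat) : bool :=
  walk_len u v k && [forall j : 'I_k, ~~ walk_len u v j].

(* N_D(v) = { y : d(v,y) \in D }. Finite distances are < #|T|, and
   d = infinity is never in D (D is a set of nonnegative integers). *)
Definition ND (D : pred nat) (v : T) : {set T} :=
  [set y | [exists k : 'I_#|T|, D k && dist_eq v y k]].

Definition Dweight (D : pred nat) (f : T -> nat) (v : T) : nat :=
  \sum_(x in ND D v) f x.

Definition vlabeling (f : T -> nat) : Prop :=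
  injective f /\ forall x, 0 < f x <= #|T|.

Definition D_antimagic_labeling (D : pred nat) (f : T -> nat) : Prop :=
  vlabeling f /\ injective (Dweight D f).

Definition D_antimagic (D : pred nat) : Prop :=
  exists f : T -> nat, D_antimagic_labeling D f.

Definition is_source (v : T) : bool := [forall u, ~~ e u v].
Definition is_sink (v : T) : bool := [forall u, ~~ e v u].

End Digraph.

(* Oriented cycle on vertices 'I_n (v_{i+1} <-> i), given by an orientation
   [o : 'I_n -> bool] of the edge {i, i+1 mod n}:
   o i = true means arc (i, i+1 mod n), o i = false means arc (i+1 mod n, i). *)
Definition ocycle_arc (n : nat) (o : 'I_n -> bool) : rel 'I_n :=
  fun i j => ((j == (i.+1 %% n) :> nat) && o i)
          || ((i == (j.+1 %% n) :> nat) && ~~ o j).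

Definition std_unidir_arc (n : nat) : rel 'I_n :=
  fun i j => (j == (i.+1 %% n) :> nat).

Definition unidirectional (n : nat) (e : rel 'I_n) : Prop :=
  exists s : {perm 'I_n}, forall i j, e (s i) (s j) = std_unidir_arc i j.

Definition theta_oriented (T : finType) (e : rel T) : Prop :=
  #|[set v | is_source e v]| = 1 /\ #|[set v | is_sink e v]| = 1 /\
  exists a b, [/\ is_source e a, is_sink e b & (e a b || e b a)].

(* Main.v *)
Require Import Defs.
From mathcomp Require Import all_boot all_fingroup zify.
Set Implicit Arguments. Unset Strict Implicit. Unset Printing Implicit Defensive.

Lemma walk_len0 (T : finType) (e : rel T) u v : walk_len e u v 0 = (u == v).
Proof.
apply/existsP/eqP => [[p /andP[_ /eqP]]|->]; first by rewrite (tuple0 p).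
by exists [tuple]; rewrite /= eqxx.
Qed.

Lemma walk_len1 (T : finType) (e : rel T) u v : walk_len e u v 1 = e u v.
Proof.
apply/existsP/idP => [[p]|H].
  case: p / tupleP => x t; rewrite (tuple0 t) /= andbT => /andP[H /eqP <-] //.
by exists [tuple v]; rewrite /= H eqxx.
Qed.

Lemma ND1 (T : finType) (e : rel T) v : 1 < #|T| ->
  ND e (pred1 1) v = [set y | e v y && (v != y)].
Proof.
move=> hT; apply/setP => y; rewrite !inE.
have -> : [exists k : 'I_#|T|, (pred1 1 k) && dist_eq e v y k] = dist_eq e v y 1.
  apply/existsP/idP => [[k /andP[/eqP k1 H]]|H]; first by rewrite -k1.
  by exists (Ordinal hT); rewrite /= H.
rewrite /dist_eq walk_len1; congr (_ && _).
apply/forallP/idP => [H|H j]; first by have := H ord0; rewrite walk_len0.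
by rewrite (ord1 j) walk_len0.
Qed.

Lemma arc_out n (o : 'I_n -> bool) v y : ocycle_arc o v y =
  ((y == ordS v) && o v) || ((y == ord_pred v) && ~~ o (ord_pred v)).
Proof.
rewrite /ocycle_arc; congr (_ || _).
have -> : (v == y.+1 %% n :> nat) = (ordS y == v) by rewrite eq_sym.
rewrite (can2_eq (@ordSK n) (@ord_predK n)).
by case: eqP => // ->.
Qed.

Lemma arc_in n (o : 'I_n -> bool) u y : ocycle_arc o u y =
  ((u == ord_pred y) && o (ord_pred y)) || ((u == ordS y) && ~~ o y).
Proof.
rewrite /ocycle_arc; congr (_ || _).
  have -> : (y == u.+1 %% n :> nat) = (ordS u == y) by rewrite eq_sym.
  rewrite (can2_eq (@ordSK n) (@ord_predK n)).
  by case: eqP => // ->.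
Qed.

Lemma modS_small n k : k < n -> k.+1 %% n = if k.+1 < n then k.+1 else 0.
Proof.
move=> kn; case: ltnP => h; first by rewrite modn_small.
have -> : k.+1 = n by apply/eqP; rewrite eqn_leq h kn.
by rewrite modnn.
Qed.

Lemma S_neq n (v : 'I_n) : 2 < n -> ordS v != v.
Proof.
move=> hn; rewrite -val_eqE /= modS_small //; case: ifP => h; lia.
Qed.

Lemma SS_neq n (v : 'I_n) : 2 < n -> ordS (ordS v) != v.
Proof.
move=> hn; rewrite -val_eqE /=.
move: (modS_small (ltn_ord v)) (modS_small (ltn_ord (ordS v))) => /= h1 h2.
change ((v.+1 %% n).+1 %% n != v :> nat); move: h2 h1; generalize (v.+1 %% n) => a; generalize (a.+1 %% n) => b -> ->. case: (ltnP v.+1 n) => h1 /=; case: ltnP => h2; lia.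
Qed.

Lemma P_neq n (v : 'I_n) : 2 < n -> ord_pred v != v.
Proof.
move=> hn; apply/eqP => h; have := S_neq (ord_pred v) hn.
by rewrite ord_predK h eqxx.
Qed.

Lemma SP_neq n (v : 'I_n) : 2 < n -> ordS v != ord_pred v.
Proof.
move=> hn; apply/eqP => h; have := SS_neq v hn.
by rewrite h ord_predK eqxx.
Qed.

Lemma weightE n (o : 'I_n -> bool) (f : 'I_n -> nat) v : 2 < n ->
  Dweight (ocycle_arc o) (pred1 1) f v =
  (if o v then f (ordS v) else 0) + (if ~~ o (ord_pred v) then f (ord_pred v) else 0).
Proof.
move=> hn; rewrite /Dweight ND1 ?card_ord; last lia.
have -> : [set y | ocycle_arc o v y && (v != y)] =
  [set y | ((y == ordS v) && o v) || ((y == ord_pred v) && ~~ o (ord_pred v))].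
  apply/setP => y; rewrite !inE arc_out.
  case: eqP => [->|_]; first by rewrite [v == _]eq_sym S_neq // andbT.
  case: eqP => [->|_] /=; last by rewrite ?andbF ?orbF ?andFb.
  by rewrite eq_sym P_neq // andbT.
case: (o v); case: (o (ord_pred v)) => /=.
- rewrite (_ : [set y | _] = [set ordS v]); last by apply/setP=> y; rewrite !inE ?andbT ?andbF ?orbF.
  by rewrite addn0 big_set1.
- rewrite (_ : [set y | _] = [set ordS v; ord_pred v]); last by apply/setP=> y; rewrite !inE ?andbT ?andbF ?orbF.
  by rewrite big_setU1 ?big_set1 // inE SP_neq.
- rewrite (_ : [set y | _] = set0); last by apply/setP=> y; rewrite !inE ?andbT ?andbF ?orbF.
  by rewrite big_set0.
- rewrite (_ : [set y | _] = [set ord_pred v]); last by apply/setP=> y; rewrite !inE ?andbT ?andbF ?orbF.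
  by rewrite big_set1.
Qed.

Lemma sourceE n (o : 'I_n -> bool) v : 2 < n ->
  is_source (ocycle_arc o) v = o v && ~~ o (ord_pred v).
Proof.
move=> hn; apply/forallP/andP => [H|[ov nop] u].
  have h1 := H (ord_pred v); have h2 := H (ordS v).
  move: h1 h2; rewrite !arc_in !eqxx [ord_pred v == _]eq_sym (negbTE (SP_neq v hn)) /=.
  by case: (o v); case: (o (ord_pred v)).
by rewrite arc_in (negbTE nop) ov !andbF.
Qed.

Lemma sinkE n (o : 'I_n -> bool) v : 2 < n ->
  is_sink (ocycle_arc o) v = ~~ o v && o (ord_pred v).
Proof.
move=> hn; apply/forallP/andP => [H|[ov nop] u].
  have h1 := H (ord_pred v); have h2 := H (ordS v).
  move: h1 h2; rewrite !arc_out !eqxx [ord_pred v == _]eq_sym (negbTE (SP_neq v hn)) /=.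
  by case: (o v); case: (o (ord_pred v)).
by rewrite arc_out (negbTE ov) nop !andbF.
Qed.

Lemma in_cases n (o : 'I_n -> bool) u y : ocycle_arc o u y ->
  (u = ord_pred y /\ o (ord_pred y)) \/ (u = ordS y /\ ~~ o y).
Proof.
rewrite arc_in => /orP[/andP[/eqP -> h]|/andP[/eqP -> h]]; [left|right]; done.
Qed.

Lemma two_in_sink n (o : 'I_n -> bool) u v y : 2 < n ->
  ocycle_arc o u y -> ocycle_arc o v y -> u != v -> is_sink (ocycle_arc o) y.
Proof.
move=> hn /in_cases[[-> h1]|[-> h1]] /in_cases[[-> h2]|[-> h2]]; rewrite ?eqxx //;
  by rewrite sinkE // ?h1 ?h2.
Qed.

Lemma iterS_val n (i : 'I_n) k : val (iter k (@ordS n) i) = (i + k) %% n.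
Proof.
elim: k => [|k IH] /=; first by rewrite addn0 modn_small.
by rewrite IH -addn1 modnDml addn1 addnS.
Qed.

Lemma iter_surj n (i j : 'I_n) : exists2 k, k < n & j = iter k (@ordS n) i.
Proof.
have n0 : 0 < n by case: (i) => /= x; case: n {i j} => //.
exists ((j + n - i) %% n); first by rewrite ltn_pmod.
apply: val_inj; rewrite iterS_val modnDmr.
have -> : i + (j + n - i) = j + n by have := ltn_ord i; lia.
by rewrite modnDr modn_small.
Qed.

Lemma mod2 n a : a < n + n -> a %% n = if a < n then a else a - n.
Proof.
move=> h; case: ltnP => h'; first by rewrite modn_small.
rewrite -{1}(subnK h') modnDr modn_small //; lia.
Qed.

Lemma card1_uniq (T : finType) (P : pred T) a v :
  #|[set x | P x]| = 1 -> P a -> P v -> v = a.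
Proof.
move=> /eqP/cards1P[x hx] pa pv.
have : a \in [set x | P x] by rewrite inE.
have : v \in [set x | P x] by rewrite inE.
by rewrite hx !inE => /eqP -> /eqP ->.
Qed.

Lemma unid_antimagic n (o : 'I_n -> bool) : 2 < n ->
  unidirectional (ocycle_arc o) -> D_antimagic (ocycle_arc o) (pred1 1%N).
Proof.
move=> hn [s hs].
exists (fun x : 'I_n => (val x).+1); split.
  split; first by move=> x y /eqP; rewrite eqSS => /eqP/val_inj.
  by move=> x; rewrite card_ord ltn_ord.
have wE v : Dweight (ocycle_arc o) (pred1 1) (fun x : 'I_n => (val x).+1) v
            = (val (s (ordS (s^-1 v)%g))).+1.
  rewrite /Dweight ND1 ?card_ord; last lia.
  rewrite (_ : [set y | _] = [set s (ordS (s^-1 v)%g)]) ?big_set1 //.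
  apply/setP => y; rewrite !inE.
  have := hs (s^-1 v)%g (s^-1 y)%g; rewrite !permKV => ->.
  rewrite /std_unidir_arc.
  have E (a b : 'I_n) : (val b == a.+1 %% n) = (b == ordS a) by [].
  rewrite E.
  apply/idP/eqP => [/andP[/eqP <- _]|->]; first by rewrite permKV.
  rewrite -(inj_eq (@perm_inj _ s^-1%g)) permK eqxx /=.
  rewrite -[v in v != _](permKV s) (inj_eq (@perm_inj _ s)) eq_sym.
  exact: S_neq.
move=> u v; rewrite !wE => /eqP; rewrite eqSS => /eqP/val_inj/perm_inj/ordS_inj/perm_inj.
done.
Qed.

Definition nx n (o : 'I_n -> bool) (v : 'I_n) := if o v then ordS v else ord_pred v.

Lemma weight_other n (o : 'I_n -> bool) f v : 2 < n ->
  ~~ is_source (ocycle_arc o) v -> ~~ is_sink (ocycle_arc o) v ->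
  Dweight (ocycle_arc o) (pred1 1) f v = f (nx o v) /\ ocycle_arc o v (nx o v).
Proof.
move=> hn; rewrite sourceE // sinkE // weightE // arc_out /nx.
by case: (o v); case: (o (ord_pred v)); rewrite /= ?eqxx ?addn0 ?orbT. 
Qed.

Lemma theta_antimagic n (o : 'I_n -> bool) : 2 < n ->
  theta_oriented (ocycle_arc o) -> D_antimagic (ocycle_arc o) (pred1 1%N).
Proof.
move=> hn [c1 [c2 [a [b [sa sb eab]]]]].
have {eab} eab : ocycle_arc o a b.
  case/orP: eab => // h; by move: sb => /forallP /(_ a); rewrite h.
have mlt : n.-1 < n by lia.
pose m : 'I_n := Ordinal mlt.
pose f := fun x : 'I_n => (val (tperm b m x)).+1.
have finj : injective f by move=> x y /eqP; rewrite eqSS => /eqP/val_inj/perm_inj.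
have frng x : 0 < f x <= n by rewrite /f /= ltn_ord.
have fb : f b = n by rewrite /f tpermL /=; lia.
exists f; split; first by split=> // x; rewrite card_ord.
pose w := Dweight (ocycle_arc o) (pred1 1) f.
have wa : n < w a.
  move: sa; rewrite /w weightE // sourceE // => /andP[-> ->] /=.
  move: eab; rewrite arc_out => /orP[/andP[/eqP <- _]|/andP[/eqP <- _]];
    rewrite fb; [have := frng (ord_pred a)|have := frng (ordS a)]; lia.
have wb : w b = 0.
  by move: sb; rewrite /w weightE // sinkE // => /andP[/negbTE -> ->].
have wo v : v != a -> v != b -> [/\ 0 < w v, w v <= n, w v = f (nx o v)
                                   & ocycle_arc o v (nx o v)].
  move=> va vb.
  have ns : ~~ is_source (ocycle_arc o) v.
    by apply: contra va => h; apply/eqP; apply: (card1_uniq c1).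
  have nk : ~~ is_sink (ocycle_arc o) v.
    by apply: contra vb => h; apply/eqP; apply: (card1_uniq c2).
  rewrite /w; have [-> h] := weight_other f hn ns nk.
  by have := frng (nx o v); case/andP=> -> ->.
move=> u v; rewrite -/(w u) -/(w v) => wuv. clearbody w f.
have cls x : x = a \/ x = b \/ (x != a /\ x != b).
  by case: (eqVneq x a); case: (eqVneq x b); auto.
move: wuv.
case: (cls u) => [->|[->|[ua ub]]]; case: (cls v) => [->|[->|[va vb]]] //;
  rewrite ?wb; try lia.
- have [_ h _ _] := wo v va vb; lia.
- have [h _ _ _] := wo v va vb; lia.
- have [_ h _ _] := wo u ua ub; lia.
- have [h _ _ _] := wo u ua ub; lia.
move=> wuv.
have [_ _ eu au] := wo u ua ub; have [_ _ ev av] := wo v va vb.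
rewrite eu ev in wuv; have ye := finj _ _ wuv; rewrite -ye in av.
apply/eqP; apply/negPn/negP => uv.
have sk := two_in_sink hn au av uv.
have yb : nx o u = b by apply: (card1_uniq c2).
rewrite yb in au av.
move: ua ub va vb uv.
case: (in_cases eab) => [[-> _]|[-> _]]; case: (in_cases au) => [[-> _]|[-> _]];
  case: (in_cases av) => [[-> _]|[-> _]]; by rewrite ?eqxx.
Qed.

Lemma forward n (o : 'I_n -> bool) : 2 < n ->
  D_antimagic (ocycle_arc o) (pred1 1%N) ->
  unidirectional (ocycle_arc o) \/ theta_oriented (ocycle_arc o).
Proof.
move=> hn [f [[finj frng] winj]].
have wE := fun v => weightE o f v hn.
case: (boolP [forall i, o i]) => [allT|nallT].
  left; exists 1%g => i j; rewrite !perm1 /ocycle_arc /std_unidir_arc.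
  by rewrite !(forallP allT) andbT andbF orbF.
case: (boolP [forall i, ~~ o i]) => [allF|nallF].
  have oF x : o x = false by apply/negbTE/(forallP allF).
  left; exists (perm (@rev_ord_inj n)) => i j; rewrite !permE /ocycle_arc /std_unidir_arc.
  rewrite !oF andbF andbT /=.
  rewrite (modS_small (ltn_ord (rev_ord j))) (modS_small (ltn_ord i)) /=.
  have := ltn_ord i; have := ltn_ord j.
  case: (ltnP (n - j.+1).+1 n) => h1; case: (ltnP i.+1 n) => h2 hj hi; apply/eqP/eqP; lia.
have [i oi] : exists i, o i.
  by move/forallPn: nallF => [i hi]; exists i; move/negPn: hi.
have [j oj] : exists j, ~~ o j.
  by move/forallPn: nallT => [j hj]; exists j.
have sink1 u v : is_sink (ocycle_arc o) u -> is_sink (ocycle_arc o) v -> u = v.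
  rewrite !sinkE // => /andP[/negbTE hu1 hu2] /andP[/negbTE hv1 hv2].
  by apply: winj; rewrite !wE hu1 hu2 hv1 hv2.
have [t st] : exists t, is_sink (ocycle_arc o) t.
  case: (boolP [exists x, is_sink (ocycle_arc o) x]) => [/existsP//|/existsPn H].
  have Hk k : o (iter k (@ordS n) i).
    elim: k => //= k IH; have := H (ordS (iter k (@ordS n) i)).
    by rewrite sinkE // ordSK IH; case: (o _).
  have [k _ jk] := iter_surj i j.
  by rewrite jk Hk in oj.
have nsk v : v != t -> ~~ o (ord_pred v) || o v.
  move=> vt; apply: contraR vt => h; apply/eqP; apply: sink1 st.
  by rewrite sinkE //; move: h; case: (o v); case: (o (ord_pred v)).
have ot : ~~ o t by move: st; rewrite sinkE // => /andP[].
have opt : o (ord_pred t) by move: st; rewrite sinkE // => /andP[].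
pose h k := o (iter k (@ordS n) t).
have itne k : 0 < k < n -> iter k (@ordS n) t != t.
  move=> /andP[k0 kn]; rewrite -val_eqE /= iterS_val; have tn := ltn_ord t; rewrite mod2; last lia.
  by case: (ltnP (t + k) n) => hh; clear h; lia.
have predit k : ord_pred (iter k.+1 (@ordS n) t) = iter k (@ordS n) t by rewrite /= ordSK.
have step k : 0 < k < n -> h k.-1 -> h k.
  move=> hk; have := nsk _ (itne k hk); case: k hk => // k _.
  by rewrite predit /h /= => /orP[/negP|].
have mono a b : a <= b < n -> h a -> h b.
  elim: b => [|b IH] /andP[ab bn]; first by rewrite leqn0 in ab; move/eqP: ab => ->.
  case: (eqVneq a b.+1) => [->//|ne] ha.
  apply: (step b.+1); first by apply/andP.
  apply: IH => //; apply/andP; split; lia.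
have src1 v1 v2 : is_source (ocycle_arc o) v1 -> is_source (ocycle_arc o) v2 -> v1 = v2.
  have [k1 k1n ->] := iter_surj t v1; have [k2 k2n ->] := iter_surj t v2.
  rewrite !sourceE //.
  case: k1 k1n => [|k1] k1n; first by rewrite /= (negbTE ot).
  case: k2 k2n => [|k2] k2n; first by rewrite andbC /= (negbTE ot).
  rewrite !predit => /andP[h1 h1'] /andP[h2 h2'].
  case: (ltngtP k1 k2) => [lt|lt|->//].
  - by have := mono k1.+1 k2 (ltac:(apply/andP; split; lia)) h1; rewrite /h (negbTE h2').
  - by have := mono k2.+1 k1 (ltac:(apply/andP; split; lia)) h2; rewrite /h (negbTE h1').
have [a sa eat] : exists2 a, is_source (ocycle_arc o) a & ocycle_arc o a t.
  case: (boolP (o (ordS t))) => ost.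
    exists (ordS t); first by rewrite sourceE // ordSK ost.
    by rewrite arc_in eqxx ot orbT.
  case: (boolP (o (ord_pred (ord_pred t)))) => opp; last first.
    exists (ord_pred t); first by rewrite sourceE // opt.
    by rewrite arc_in eqxx opt.
  have : ord_pred t = ordS t.
    apply: winj; rewrite !wE ord_predK opt ordSK opp (negbTE ost) ot /=.
    by rewrite addn0.
  by move/eqP; rewrite eq_sym (negbTE (SP_neq t hn)).
right; split; [|split].
- rewrite (_ : [set v | _] = [set a]) ?cards1 //.
  by apply/setP => v; rewrite !inE; apply/idP/eqP => [sv|->] //; apply: src1.
- rewrite (_ : [set v | _] = [set t]) ?cards1 //.
  by apply/setP => v; rewrite !inE; apply/idP/eqP => [sv|->] //; apply: sink1.
- by exists a, t; split => //; rewrite eat.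
Qed.

Theorem mainTheorem4 (n : nat) (o : 'I_n -> bool) : 3 <= n ->
  (D_antimagic (ocycle_arc o) (pred1 1%N) <->
   unidirectional (ocycle_arc o) \/ theta_oriented (ocycle_arc o)).
Proof.
move=> hn; split; first exact: forward.
by case; [apply: unid_antimagic|apply: theta_antimagic].
Qed.
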